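(* Assume Martin's Axiom ($\mathsf{MA}$). Let $\mathcal{A} \subseteq \mathbb{N}^{\mathbb{N}}$ be an almost disjoint family of functions with $|\mathcal{A}| < 2^{\aleph_0}$, and let $F \subseteq \mathbb{N}^{\mathbb{N}}$ be a family that is not finitely covered by $\mathcal{A}$ with $|F| < 2^{\aleph_0}$. Then there exists a function $g \in \mathbb{N}^{\mathbb{N}}$ with $g \notin \mathcal{A}$ such that (i) $\mathcal{A} \cup \{g\}$ is an almost disjoint family of functions, and (ii) for every $f \in F$ the set $\{n \in \mathbb{N} : f(n) = g(n)\}$ is infinite.
   Context: Functions $f \in \mathbb{N}^{\mathbb{N}}$ are identified with their graphs $\{(n,f(n)) : n\in\mathbb{N}\} \subseteq \mathbb{N}\times\mathbb{N}$. Two functions $g_0,g_1 \in \mathbb{N}^{\mathbb{N}}$ are almost disjoint if $\{n : g_0(n)=g_1(n)\}$ is finite; a family $\mathcal{A} \subseteq \mathbb{N}^{\mathbb{N}}$ is an almost disjoint family of functions if any two distinct members are almost disjoint. A function $f$ is finitely covered by $\mathcal{A}$ if there are $g_0,\dots,g_n \in \mathcal{A}$ such that $\{k : f(k) \notin \{g_0(k),\dots,g_n(k)\}\}$ is finite. A family $F$ is finitely covered by $\mathcal{A}$ if some $f \in F$ is finitely covered by $\mathcal{A}$ (so ''$F$ is not finitely covered by $\mathcal{A}$'' means no member of $F$ is finitely covered by $\mathcal{A}$). *)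

(* Defs.v *)
From Stdlib Require Import List Arith.
Import ListNotations.

Definition finite_nat (X : nat -> Prop) : Prop :=
  exists N, forall n, X n -> n < N.

Definition infinite_nat (X : nat -> Prop) : Prop := ~ finite_nat X.

(* Cardinality strictly below the continuum 2^aleph_0:
   there is no injection of 2^N into the set / type. *)
Definition card_lt_c {T : Type} (X : T -> Prop) : Prop :=
  ~ exists e : (nat -> bool) -> T,
      (forall x, X (e x)) /\ (forall x y, e x = e y -> x = y).

Definition type_card_lt_c (I : Type) : Prop := card_lt_c (fun _ : I => True).

Definition almost_disjoint (A : (nat -> nat) -> Prop) : Prop :=
  forall g0 g1, A g0 -> A g1 -> g0 <> g1 ->
    finite_nat (fun n => g0 n = g1 n).

Definition finitely_covered (f : nat -> nat) (A : (nat -> nat) -> Prop) : Prop :=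
  exists gs : list (nat -> nat), gs <> [] /\ (forall g, In g gs -> A g) /\
    finite_nat (fun k => forall g, In g gs -> f k <> g k).

Definition family_not_finitely_covered (F A : (nat -> nat) -> Prop) : Prop :=
  forall f, F f -> ~ finitely_covered f A.

Section Forcing.
Context {P : Type} (le : P -> P -> Prop).

Definition compatible (p q : P) : Prop := exists r, le r p /\ le r q.

Definition antichain (X : P -> Prop) : Prop :=
  forall p q, X p -> X q -> p <> q -> ~ compatible p q.

Definition countable_set (X : P -> Prop) : Prop :=
  exists c : P -> nat, forall p q, X p -> X q -> c p = c q -> p = q.

Definition ccc : Prop := forall X, antichain X -> countable_set X.

Definition dense (D : P -> Prop) : Prop := forall p, exists q, le q p /\ D q.

Definition filter (G : P -> Prop) : Prop :=
  (exists p, G p) /\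
  (forall p q, G p -> le p q -> G q) /\
  (forall p q, G p -> G q -> exists r, G r /\ le r p /\ le r q).

Definition is_preorder : Prop :=
  (forall p, le p p) /\ (forall p q r, le p q -> le q r -> le p r).
End Forcing.

Definition MartinsAxiom : Prop :=
  forall (P : Type) (le : P -> P -> Prop),
    inhabited P -> is_preorder le -> ccc le ->
    forall (I : Type) (D : I -> P -> Prop),
      type_card_lt_c I -> (forall i, dense le (D i)) ->
      exists G, filter le G /\ forall i, exists p, G p /\ D i p.

(* Main.v *)
Require Import Defs.
From Stdlib Require Import List Arith Lia Classical ClassicalEpsilon Cantor FunctionalExtensionality.
Import ListNotations.

Lemma choice_gen {D X : Type} (R : D -> X -> Prop) :
  (forall k, exists x, R k x) -> exists f : D -> X, forall k, R k (f k).
Proof.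
  intro H. exists (fun k => proj1_sig (constructive_indefinite_description _ (H k))).
  intro k. exact (proj2_sig (constructive_indefinite_description _ (H k))).
Qed.

Definition phi (y : nat -> nat -> bool) : nat -> bool :=
  fun n => y (fst (of_nat n)) (snd (of_nat n)).

Lemma phi_inj y z : phi y = phi z -> y = z.
Proof.
  intro H. apply functional_extensionality; intro a.
  apply functional_extensionality; intro b.
  pose proof (f_equal (fun u => u (to_nat (a,b))) H) as H'. unfold phi in H'.
  rewrite cancel_of_to in H'. exact H'.
Qed.

Lemma card_union {I : Type} (X : nat -> I -> Prop) :
  (forall k, card_lt_c (X k)) -> (forall i, exists k, X k i) -> type_card_lt_c I.
Proof.
  intros HX Hcov [e [_ einj]].
  set (e' := fun y => e (phi y)).
  assert (e'inj : forall y z, e' y = e' z -> y = z)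
    by (intros y z H; apply phi_inj, einj, H).
  assert (Hk : forall k, exists x : nat -> bool,
            ~ exists y, X k (e' y) /\ y k = x).
  { intro k. apply NNPP; intro Hn.
    assert (Hs : forall x, exists y, X k (e' y) /\ y k = x).
    { intro x. apply NNPP; intro Hn2. apply Hn. exists x. exact Hn2. }
    destruct (choice_gen _ Hs) as [r Hr].
    apply (HX k). exists (fun x => e' (r x)). split.
    - intro x. apply (Hr x).
    - intros x y H. apply e'inj in H.
      destruct (Hr x) as [_ Hx]. destruct (Hr y) as [_ Hy].
      rewrite <- Hx, <- Hy, H. reflexivity. }
  destruct (choice_gen _ Hk) as [x Hx].
  destruct (Hcov (e' x)) as [k Hk'].
  apply (Hx k). exists x. auto.
Qed.

From Stdlib Require Import ProofIrrelevance.

Lemma sig_eq' {T} (Q : T -> Prop) (a b : {x | Q x}) : proj1_sig a = proj1_sig b -> a = b.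
Proof.
  destruct a as [a pa], b as [b pb]; simpl; intro H; subst. f_equal. apply proof_irrelevance.
Qed.

Section Main.
Variables (A F : (nat -> nat) -> Prop).

Definition Idx := (nat * option ({h | A h} + {f | F f}))%type.

Definition icode (i : Idx) : nat :=
  match i with
  | (k, None) => 3 * k
  | (k, Some (inl _)) => 3 * k + 1
  | (k, Some (inr _)) => 3 * k + 2
  end.

Lemma fiber_small : card_lt_c A -> card_lt_c F ->
  forall n, card_lt_c (fun i : Idx => icode i = n).
Proof.
  intros HA HF n [e [He Hinj]].
  set (x0 := fun _ : nat => false). set (x1 := fun _ : nat => true).
  assert (Hx : x0 <> x1) by (intro H; pose proof (f_equal (fun u => u 0) H) as H'; discriminate).
  destruct (e x0) as [k o] eqn:E0. pose proof (He x0) as H0. rewrite E0 in H0.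
  destruct o as [[h0|f0]|]; simpl in H0.
  - apply HA.
    exists (fun x => match snd (e x) with Some (inl h) => proj1_sig h | _ => proj1_sig h0 end).
    split.
    + intro x. destruct (snd (e x)) as [[h|f]|]; apply proj2_sig.
    + intros x y Hxy. apply Hinj.
      assert (Sh : forall z, exists h, e z = (k, Some (inl h))).
      { intro z. pose proof (He z) as Hz. destruct (e z) as [k' [[h|f]|]]; simpl in Hz.
        - exists h. f_equal. lia.
        - lia.
        - lia. }
      destruct (Sh x) as [hx Ex]. destruct (Sh y) as [hy Ey].
      rewrite Ex, Ey in Hxy |- *. simpl in Hxy. apply sig_eq' in Hxy. subst. reflexivity.
  - apply HF.
    exists (fun x => match snd (e x) with Some (inr f) => proj1_sig f | _ => proj1_sig f0 end).
    split.
    + intro x. destruct (snd (e x)) as [[h|f]|]; apply proj2_sig.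
    + intros x y Hxy. apply Hinj.
      assert (Sh : forall z, exists f, e z = (k, Some (inr f))).
      { intro z. pose proof (He z) as Hz. destruct (e z) as [k' [[h|f]|]]; simpl in Hz.
        - lia.
        - exists f. f_equal. lia.
        - lia. }
      destruct (Sh x) as [hx Ex]. destruct (Sh y) as [hy Ey].
      rewrite Ex, Ey in Hxy |- *. simpl in Hxy. apply sig_eq' in Hxy. subst. reflexivity.
  - apply Hx, Hinj.
    assert (Sh : forall z, e z = (k, None)).
    { intro z. pose proof (He z) as Hz. destruct (e z) as [k' [[h|f]|]]; simpl in Hz.
      - lia.
      - lia.
      - f_equal. lia. }
    rewrite !Sh. reflexivity.
Qed.

Lemma Idx_small : card_lt_c A -> card_lt_c F -> type_card_lt_c Idx.
Proof.
  intros HA HF. apply (card_union (fun n i => icode i = n)).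
  - apply fiber_small; assumption.
  - intro i. exists (icode i). reflexivity.
Qed.

End Main.
Fixpoint code_list (l : list nat) : nat :=
  match l with [] => 0 | x :: l' => S (to_nat (x, code_list l')) end.

Lemma code_list_inj l l' : code_list l = code_list l' -> l = l'.
Proof.
  revert l'; induction l as [|x l IH]; intros [|y l'] H; simpl in H; try discriminate; auto.
  injection H as H. apply (f_equal of_nat) in H. pose proof (cancel_of_to (x, code_list l)) as C1; pose proof (cancel_of_to (y, code_list l')) as C2; simpl in C1, C2, H; rewrite C1, C2 in H.
  injection H as H1 H2. subst. f_equal. auto.
Qed.

Definition extend (s : list nat) (v : nat -> nat) (m : nat) : list nat :=
  s ++ map v (seq (length s) (m - length s)).

Lemma extend_length s v m : length (extend s v m) = length s + (m - length s).
Proof. unfold extend. rewrite length_app, length_map, length_seq. reflexivity. Qed.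

Lemma extend_nth_new s v m n : length s <= n < m -> nth n (extend s v m) 0 = v n.
Proof.
  intro H. unfold extend. rewrite app_nth2 by lia.
  rewrite nth_indep with (d' := v 0) by (rewrite length_map, length_seq; lia).
  rewrite map_nth, seq_nth by lia. f_equal. lia.
Qed.

Definition mx (E : list (nat -> nat)) (n : nat) : nat :=
  fold_right (fun h acc => max (h n) acc) 0 E.

Lemma mx_ge E n h : In h E -> h n <= mx E n.
Proof. induction E as [|h' E IH]; simpl; intros H; [contradiction|]; destruct H as [H|H]; [subst; lia|specialize (IH H); lia]. Qed.

Definition avoid E n := S (mx E n).

Lemma avoid_ne E n h : In h E -> avoid E n <> h n.
Proof. intro H. apply mx_ge with (n:=n) in H. unfold avoid. lia. Qed.

Section Forc.
Variables (A F : (nat -> nat) -> Prop).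

Definition Pc := {p : list nat * list (nat -> nat) | forall h, In h (snd p) -> A h}.
Definition sq (p : Pc) := fst (proj1_sig p).
Definition Eq (p : Pc) := snd (proj1_sig p).

Definition lec (q p : Pc) : Prop :=
  (exists t, sq q = sq p ++ t) /\ incl (Eq p) (Eq q) /\
  forall n h, length (sq p) <= n < length (sq q) -> In h (Eq p) -> nth n (sq q) 0 <> h n.

Lemma lec_pre : is_preorder lec.
Proof.
  split.
  - intro p. split; [exists []; rewrite app_nil_r; auto|]. split; [apply incl_refl|]. intros; lia.
  - intros p q r [[t1 H1] [I1 N1]] [[t2 H2] [I2 N2]]. split; [|split].
    + exists (t2 ++ t1). rewrite H1, H2, app_assoc. reflexivity.
    + eapply incl_tran; eauto.
    + intros n h Hn Hh.
      destruct (Nat.lt_ge_cases n (length (sq q))) as [Hl|Hl].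
      * rewrite H1, app_nth1 by exact Hl. apply N2; auto; lia.
      * apply N1; [lia| apply I2; exact Hh].
Qed.

Lemma lec_len q p : lec q p -> length (sq p) <= length (sq q).
Proof. intros [[t H] _]. rewrite H, length_app. lia. Qed.

Lemma lec_nth q p n : lec q p -> n < length (sq p) -> nth n (sq q) 0 = nth n (sq p) 0.
Proof. intros [[t H] _] Hn. rewrite H, app_nth1 by exact Hn. reflexivity. Qed.

Lemma lec_ccc : ccc lec.
Proof.
  intros X HX. exists (fun p => code_list (sq p)).
  intros p q Hp Hq Hc. apply code_list_inj in Hc.
  apply NNPP; intro Hne. apply (HX p q Hp Hq Hne).
  assert (HA : forall h, In h (snd (sq p, Eq p ++ Eq q)) -> A h).
  { simpl. intros h Hh. apply in_app_or in Hh. destruct Hh as [Hh|Hh];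
    [apply (proj2_sig p) | apply (proj2_sig q)]; exact Hh. }
  exists (exist _ (sq p, Eq p ++ Eq q) HA). split; split; cbn [sq Eq proj1_sig fst snd].
  - exists []. rewrite app_nil_r. reflexivity.
  - split; [apply incl_appl, incl_refl|]. intros; lia.
  - exists []. rewrite app_nil_r. exact Hc.
  - split; [apply incl_appr, incl_refl|]. intros n h Hn. rewrite Hc in Hn. lia.
Qed.

Lemma extend_lec (p : Pc) v m :
  (forall n h, length (sq p) <= n < m -> In h (Eq p) -> v n <> h n) ->
  exists q : Pc, sq q = extend (sq p) v m /\ Eq q = Eq p /\ lec q p.
Proof.
  intro Hv. exists (exist _ (extend (sq p) v m, Eq p) (proj2_sig p)).
  split; [reflexivity|]. split; [reflexivity|].
  split; [|split]; cbn [sq Eq proj1_sig fst snd].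
  - exists (map v (seq (length (sq p)) (m - length (sq p)))). reflexivity.
  - apply incl_refl.
  - intros n h Hn Hh. rewrite extend_length in Hn.
    rewrite extend_nth_new by lia. apply Hv; auto. lia.
Qed.

Definition Dn (i : Idx A F) (q : Pc) : Prop :=
  match i with
  | (k, None) => k < length (sq q)
  | (k, Some (inl h)) => In (proj1_sig h) (Eq q)
  | (k, Some (inr f)) => exists n, k <= n < length (sq q) /\ nth n (sq q) 0 = proj1_sig f n
  end.

Lemma Dn_dense : family_not_finitely_covered F A -> forall i, dense lec (Dn i).
Proof.
  intros HF [k [[h|f]|]] p; simpl.
  - assert (HA : forall g, In g (snd (sq p, proj1_sig h :: Eq p)) -> A g).
    { simpl. intros g [Hg|Hg]; [subst; apply proj2_sig | apply (proj2_sig p); exact Hg]. }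
    exists (exist _ (sq p, proj1_sig h :: Eq p) HA).
    split; [split; [|split]|]; cbn [sq Eq proj1_sig fst snd].
    + exists []. rewrite app_nil_r. reflexivity.
    + intros g Hg; right; exact Hg.
    + intros; lia.
    + left; reflexivity.
  - set (m := max k (length (sq p))).
    assert (Hn : exists n, m <= n /\ forall h, In h (Eq p) -> proj1_sig f n <> h n).
    { apply NNPP; intro Hn.
      destruct (Eq p) as [|h0 E'] eqn:HE.
      - apply Hn. exists m. split; [lia|]. intros h [].
      - apply (HF (proj1_sig f) (proj2_sig f)). exists (h0 :: E'). split; [discriminate|]. split.
        + intros g Hg. apply (proj2_sig p). fold (Eq p). rewrite HE. exact Hg.
        + exists m. intros n Hc. apply NNPP; intro Hc'. apply Hn. exists n. split; [lia|exact Hc]. }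
    destruct Hn as [n [Hmn Hfn]].
    destruct (extend_lec p (fun j => if j =? n then proj1_sig f n else avoid (Eq p) j) (S n))
      as [q [Hs [HE Hq]]].
    { intros j h Hj Hh. destruct (j =? n) eqn:Ej.
      - apply Nat.eqb_eq in Ej. subst. auto.
      - apply avoid_ne; auto. }
    exists q. split; [exact Hq|]. exists n. rewrite Hs, extend_length. split; [lia|].
    rewrite extend_nth_new by lia. rewrite Nat.eqb_refl. reflexivity.
  - destruct (extend_lec p (avoid (Eq p)) (S k)) as [q [Hs [HE Hq]]].
    { intros j h Hj Hh. apply avoid_ne; auto. }
    exists q. split; [exact Hq|]. rewrite Hs, extend_length. lia.
Qed.

End Forc.

Theorem mainTheorem1 :
  MartinsAxiom ->
  forall (A F : (nat -> nat) -> Prop),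
    almost_disjoint A -> card_lt_c A ->
    family_not_finitely_covered F A -> card_lt_c F ->
    exists g : nat -> nat,
      ~ A g /\
      almost_disjoint (fun h => A h \/ h = g) /\
      (forall f, F f -> infinite_nat (fun n => f n = g n)).
Proof.
  intros MA A F HAD HA HFc HF.
  assert (Hinh : inhabited (Pc A)).
  { constructor. exists ([], []). intros h Hh. destruct Hh. }
  destruct (MA (Pc A) (lec A) Hinh (lec_pre A) (lec_ccc A) (Idx A F) (Dn A F)
              (Idx_small A F HA HF) (Dn_dense A F HFc)) as [G [[Gne [Gup Gdir]] Gmeet]].
  assert (Hdef : forall n, exists p, G p /\ n < length (sq A p)).
  { intro n. destruct (Gmeet (n, None)) as [p [Gp Dp]]. exists p. auto. }
  destruct (choice_gen _ Hdef) as [pick Hpick].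
  set (g := fun n => nth n (sq A (pick n)) 0).
  assert (Hcoh : forall p n, G p -> n < length (sq A p) -> g n = nth n (sq A p) 0).
  { intros p n Gp Hn. destruct (Hpick n) as [Gq Hq].
    destruct (Gdir (pick n) p Gq Gp) as [r [Gr [Hr1 Hr2]]].
    unfold g. rewrite <- (lec_nth A r (pick n) n Hr1 Hq), <- (lec_nth A r p n Hr2 Hn).
    reflexivity. }
  assert (Hkey : forall p, G p -> forall h, In h (Eq A p) -> forall n,
             length (sq A p) <= n -> g n <> h n).
  { intros p Gp h Hh n Hn. destruct (Hpick n) as [Gq Hq].
    destruct (Gdir (pick n) p Gq Gp) as [r [Gr [Hr1 Hr2]]].
    unfold g. rewrite <- (lec_nth A r (pick n) n Hr1 Hq).
    destruct Hr2 as [_ [_ N]]. apply N; auto.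
    pose proof (lec_len A r (pick n) Hr1). lia. }
  assert (Hfin : forall h, A h -> finite_nat (fun n => g n = h n)).
  { intros h Hh. destruct (Gmeet (0, Some (inl (exist _ h Hh)))) as [p [Gp Dp]].
    simpl in Dp. exists (length (sq A p)). intros n Hn.
    destruct (Nat.lt_ge_cases n (length (sq A p))) as [H|H]; auto.
    exfalso. exact (Hkey p Gp h Dp n H Hn). }
  exists g. split; [|split].
  - intro Hg. destruct (Hfin g Hg) as [N HN].
    pose proof (HN N eq_refl). lia.
  - intros g0 g1 [H0|H0] [H1|H1] Hne.
    + apply HAD; auto.
    + subst. destruct (Hfin g0 H0) as [N HN]. exists N. intros n Hn. apply HN. auto.
    + subst. destruct (Hfin g1 H1) as [N HN]. exists N. intros n Hn. apply HN. auto.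
    + subst. exfalso. apply Hne. reflexivity.
  - intros f Hf [N HN].
    destruct (Gmeet (N, Some (inr (exist _ f Hf)))) as [p [Gp Dp]].
    simpl in Dp. destruct Dp as [n [Hn Hnf]].
    assert (f n = g n) by (rewrite (Hcoh p n Gp ltac:(lia)); auto).
    pose proof (HN n H). lia.
Qed.
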